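(* Let $m\ge 2$ and $n\ge 2$ be integers. The number $D_F(m,n)$ of maximal antichains of $[m]^n$ is at least the number $D_E(m,n-1)$ of antichains (the empty set included) of $[m]^{n-1}$: $D_F(m,n)\ge D_E(m,n-1)$.
   Context: $[m]=\{1,\dots,m\}$ with its natural order; $[m]^k$ carries the componentwise (product) order. An antichain is a set of pairwise incomparable elements; it is maximal if no further element of the poset can be added while remaining an antichain. *)

(* Defs.v *)
From mathcomp Require Import all_boot.
Set Implicit Arguments. Unset Strict Implicit. Unset Printing Implicit Defensive.

(* Points of [m]^k: functions 'I_k -> 'I_m (coordinate values 0..m-1 encode 1..m;
   the order is the same). *)
Definition cube (m k : nat) := {ffun 'I_k -> 'I_m}.

Definition cle (m k : nat) (x y : cube m k) : bool := [forall i, x i <= y i].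

Definition comparable (m k : nat) (x y : cube m k) : bool := cle x y || cle y x.

Definition antichain (m k : nat) (A : {set cube m k}) : bool :=
  [forall x in A, forall y in A, (x != y) ==> ~~ comparable x y].

Definition max_antichain (m k : nat) (A : {set cube m k}) : bool :=
  antichain A && [forall z, (z \notin A) ==> ~~ antichain (z |: A)].

Definition DE (m k : nat) : nat := #|[set A : {set cube m k} | antichain A]|.

Definition DF (m k : nat) : nat := #|[set A : {set cube m k} | max_antichain A]|.

(* Main.v *)
Require Import Defs.
From mathcomp Require Import all_boot.
From mathcomp Require Import zify.

Set Implicit Arguments. Unset Strict Implicit. Unset Printing Implicit Defensive.

Section S.
Variables p k : nat.
Local Notation C := (cube p.+2 k).
Local Notation D := (cube p.+2 k.+1).

Definition restr (y : D) : C := [ffun i => y (lift ord0 i)].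
Definition ext (a : C) (j : 'I_p.+2) : D :=
  [ffun i => if unlift ord0 i is Some i' then a i' else j].

Lemma ext_ord0 a j : ext a j ord0 = j.
Proof. by rewrite ffunE unlift_none. Qed.

Lemma restr_ext a j : restr (ext a j) = a.
Proof. by apply/ffunP => i; rewrite !ffunE liftK. Qed.

Lemma ext_restr y : ext (restr y) (y ord0) = y.
Proof.
apply/ffunP => i; rewrite !ffunE; case: unliftP => [j|] -> //.
by rewrite ffunE.
Qed.

Lemma cleE (y z : D) : cle y z = (y ord0 <= z ord0) && cle (restr y) (restr z).
Proof.
apply/forallP/andP.
  move=> H; split; first exact: H.
  by apply/forallP => i; rewrite !ffunE; exact: H.
move=> [h1 /forallP h2] i; case: (unliftP ord0 i) => [j|] -> //.
by have := h2 j; rewrite !ffunE.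
Qed.

Lemma cle_refl (x : C) : cle x x.
Proof. by apply/forallP. Qed.

Lemma cle_trans (x y z : C) : cle x y -> cle y z -> cle x z.
Proof.
move=> /forallP h1 /forallP h2; apply/forallP => i.
exact: leq_trans (h1 i) (h2 i).
Qed.

Lemma cle_sum (v x : C) : cle v x -> v != x ->
  \sum_i (v i : nat) < \sum_i (x i : nat).
Proof.
move=> /forallP hc hne.
have /existsP [i hi] : [exists i, v i != x i].
  apply: contraR hne => /existsPn h; apply/eqP/ffunP => i.
  by apply/eqP; move: (h i); rewrite negbK.
rewrite [X in X < _](bigD1 i) // [X in _ < X](bigD1 i) //=.
have h1 : (v i : nat) < x i by rewrite ltn_neqAle hc andbT.
by rewrite -addSn; apply: leq_add h1 _; apply: leq_sum => j _; exact: hc.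
Qed.

Definition U (A : {set C}) := [set x | ~~ [exists a in A, cle x a]].
Definition MinU (A : {set C}) :=
  [set u in U A | [forall v in U A, cle v u ==> (v == u)]].
Definition B (A : {set C}) : {set D} :=
  [set y : D | ((y ord0 == ord_max) && (restr y \in A))
        || ((y ord0 == ord0) && (restr y \in MinU A))].

Lemma min_exists A x : x \in U A -> exists2 u, u \in MinU A & cle u x.
Proof.
move: (ltnSn (\sum_i (x i : nat))); move: {2}(\sum_i (x i : nat)).+1 => N.
elim: N x => [|N IH] x //.
move=> hs hx.
case: (boolP [forall v in U A, cle v x ==> (v == x)]) => hm.
  by exists x; [rewrite inE hx hm | exact: cle_refl].
move: hm => /forall_inPn [v hv]; rewrite negb_imply => /andP [hvx hne].
have := cle_sum hvx hne => hlt.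
have [|u hu huv] := IH v _ hv; first by apply: leq_trans hlt _; rewrite -ltnS.
by exists u => //; exact: cle_trans huv hvx.
Qed.

Lemma B_max A : antichain A -> max_antichain (B A).
Proof.
move=> /forall_inP hA.
have ordne : (ord_max : 'I_p.+2) != ord0 by [].
apply/andP; split.
  have key : forall y z, y \in B A -> z \in B A -> y != z -> ~~ cle y z.
    move=> y z; rewrite !inE => hy hz hyz; apply/negP.
    rewrite cleE => /andP [h0 hr].
    move: hy hz => /orP [/andP [/eqP ey ay] | /andP [/eqP ey uy]]
                   /orP [/andP [/eqP ez az] | /andP [/eqP ez uz]].
    - have := hA _ ay => /forall_inP /(_ _ az).
      case: eqP => [e _ | _ /= /negP]; last by apply; rewrite /Defs.comparable hr.
      by move: hyz; rewrite -(ext_restr y) -(ext_restr z) e ey ez eqxx.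
    - by move: h0; rewrite ey ez.
    - move: uy; rewrite /MinU /U ?inE => /andP [/existsPn /(_ (restr z))].
      by rewrite az hr.
    - move: uy uz; rewrite /MinU /U ?inE => /andP [hu _] /andP [_ /forall_inP hm].
      move: (hm (restr y)); rewrite inE hu => /(_ isT); rewrite hr /= => /eqP e.
      by move: hyz; rewrite -(ext_restr y) -(ext_restr z) e ey ez eqxx.
  apply/forall_inP => y hy; apply/forall_inP => z hz; apply/implyP => hyz.
  by rewrite /Defs.comparable negb_or key // key // eq_sym.
apply/forallP => z; apply/implyP => hz; apply/negP => /forall_inP hant.
have contra : forall w, w \in B A -> Defs.comparable z w -> False.
  move=> w hw hc.
  have hzw : z != w by apply: contraNneq hz => ->.
  move: (hant z); rewrite setU11 => /(_ isT) /forall_inP /(_ w).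
  by rewrite in_setU1 hw orbT hzw hc => /(_ isT).
case: (boolP [exists a in A, cle (restr z) a]) => [/exists_inP [a ha hza]|hn].
  apply: (contra (ext a ord_max)).
    by rewrite inE ext_ord0 restr_ext eqxx ha.
  apply/orP; left; rewrite cleE ext_ord0 restr_ext hza andbT.
  by rewrite -ltnS ltn_ord.
have hU : restr z \in U A by rewrite inE hn.
have [u hu huz] := min_exists hU.
apply: (contra (ext u ord0)).
  by rewrite inE ext_ord0 restr_ext eqxx hu orbT.
by apply/orP; right; rewrite cleE ext_ord0 restr_ext huz.
Qed.

Lemma B_inj : injective B.
Proof.
move=> A1 A2 e; apply/setP => a.
have : (ext a ord_max \in B A1) = (ext a ord_max \in B A2) by rewrite e.
by rewrite !inE ext_ord0 restr_ext eqxx /= !orbF.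
Qed.

End S.

Theorem proposition5 (m n : nat) (hm : 2 <= m) (hn : 2 <= n) :
  DE m n.-1 <= DF m n.
Proof.
case: m hm => [|[|p]] // _; case: n hn => [|k] // _ /=.
rewrite /DE /DF -(card_imset _ (@B_inj p k)).
apply: subset_leq_card; apply/subsetP => _ /imsetP [A hA ->].
by move: hA; rewrite !inE; exact: B_max.
Qed.
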